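(* The theory $SOA$ of second order arithmetic cannot eliminate imaginaries.
   Context: $SOA$ is second order arithmetic with full comprehension and with choice for all definable sets of reals indexed by natural numbers (the theory $\Sigma^{1}_{\infty}\text{-}AC_{0}$). A theory $T$ eliminates imaginaries if whenever $T$ proves that some formula $E(x,y)$ defines an equivalence relation, there is a formula $F$ such that $T$ proves that $F$ defines a function and that for all $x,y$, $xEy$ iff $F(x)=F(y)$ (one may work with single variables rather than tuples, since the theories considered code finite sequences). *)

(* Defs.v *)
From Stdlib Require Import Arith.

(* ---------- syntax (de Bruijn indices, one index space per sort) ---------- *)

Inductive term : Type :=
| tvar  : nat -> term
| tzero : term
| tsucc : term -> term
| tadd  : term -> term -> term
| tmul  : term -> term -> term.

(* formulas; set variables are the only set terms (fmem t X : t ∈ X_X) *)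
Inductive form : Type :=
| fbot  : form
| feq   : term -> term -> form
| flt   : term -> term -> form
| fmem  : term -> nat -> form
| fimp  : form -> form -> form
| fallN : form -> form      (* number quantifier, binds number index 0 *)
| fallS : form -> form.     (* set quantifier, binds set index 0 *)

Definition fneg (p : form) : form := fimp p fbot.
Definition for_ (p q : form) : form := fimp (fneg p) q.
Definition fand (p q : form) : form := fneg (fimp p (fneg q)).
Definition fiff (p q : form) : form := fand (fimp p q) (fimp q p).
Definition fexN (p : form) : form := fneg (fallN (fneg p)).
Definition fexS (p : form) : form := fneg (fallS (fneg p)).

Fixpoint tsubst (s : nat -> term) (t : term) : term :=
  match t with
  | tvar n => s n
  | tzero => tzero
  | tsucc u => tsucc (tsubst s u)
  | tadd u v => tadd (tsubst s u) (tsubst s v)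
  | tmul u v => tmul (tsubst s u) (tsubst s v)
  end.

Definition upN (s : nat -> term) : nat -> term :=
  fun n => match n with
           | 0 => tvar 0
           | S m => tsubst (fun k => tvar (S k)) (s m)
           end.

Definition upS (r : nat -> nat) : nat -> nat :=
  fun n => match n with 0 => 0 | S m => S (r m) end.

Fixpoint fsubst (s : nat -> term) (r : nat -> nat) (p : form) : form :=
  match p with
  | fbot => fbot
  | feq u v => feq (tsubst s u) (tsubst s v)
  | flt u v => flt (tsubst s u) (tsubst s v)
  | fmem u X => fmem (tsubst s u) (r X)
  | fimp a b => fimp (fsubst s r a) (fsubst s r b)
  | fallN a => fallN (fsubst (upN s) r a)
  | fallS a => fallS (fsubst s (upS r) a)
  end.

Definition liftN (p : form) : form := fsubst (fun k => tvar (S k)) (fun k => k) p.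
Definition liftS (p : form) : form := fsubst tvar S p.
Definition instN (t : term) (p : form) : form :=
  fsubst (fun n => match n with 0 => t | S m => tvar m end) (fun k => k) p.
Definition instS (Y : nat) (p : form) : form :=
  fsubst tvar (fun n => match n with 0 => Y | S m => m end) p.

Fixpoint tbound (n : nat) (t : term) : Prop :=
  match t with
  | tvar k => k < n
  | tzero => True
  | tsucc u => tbound n u
  | tadd u v | tmul u v => tbound n u /\ tbound n v
  end.

Fixpoint fbound (n m : nat) (p : form) : Prop :=
  match p with
  | fbot => True
  | feq u v | flt u v => tbound n u /\ tbound n v
  | fmem u X => tbound n u /\ X < m
  | fimp a b => fbound n m a /\ fbound n m b
  | fallN a => fbound (S n) m a
  | fallS a => fbound n (S m) a
  end.

(* (free variables of proved formulas are read universally; generalization) *)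

Inductive Prov (T : form -> Prop) : form -> Prop :=
| pr_ax   : forall p, T p -> Prov T p
| pr_K    : forall p q, Prov T (fimp p (fimp q p))
| pr_S    : forall p q c,
    Prov T (fimp (fimp p (fimp q c)) (fimp (fimp p q) (fimp p c)))
| pr_DN   : forall p, Prov T (fimp (fneg (fneg p)) p)
| pr_MP   : forall p q, Prov T (fimp p q) -> Prov T p -> Prov T q
| pr_instN : forall p t, Prov T (fimp (fallN p) (instN t p))
| pr_qimpN : forall p q, Prov T (fimp (fallN (fimp (liftN q) p)) (fimp q (fallN p)))
| pr_genN : forall p, Prov T p -> Prov T (fallN p)
| pr_instS : forall p Y, Prov T (fimp (fallS p) (instS Y p))
| pr_qimpS : forall p q, Prov T (fimp (fallS (fimp (liftS q) p)) (fimp q (fallS p)))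
| pr_genS : forall p, Prov T p -> Prov T (fallS p)
| pr_refl : forall t, Prov T (feq t t)
| pr_leib : forall p u v, Prov T (fimp (feq u v) (fimp (instN u p) (instN v p))).

Definition v0 := tvar 0.
Definition v1 := tvar 1.
Definition tpair (a b : term) : term := tadd (tmul (tadd a b) (tadd a b)) a.

Inductive SOA : form -> Prop :=
(* basic axioms (v1 = m, v0 = n) *)
| soa_succ0 : SOA (fallN (fneg (feq (tsucc v0) tzero)))
| soa_succinj : SOA (fallN (fallN (fimp (feq (tsucc v1) (tsucc v0)) (feq v1 v0))))
| soa_add0 : SOA (fallN (feq (tadd v0 tzero) v0))
| soa_addS : SOA (fallN (fallN (feq (tadd v1 (tsucc v0)) (tsucc (tadd v1 v0)))))
| soa_mul0 : SOA (fallN (feq (tmul v0 tzero) tzero))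
| soa_mulS : SOA (fallN (fallN (feq (tmul v1 (tsucc v0)) (tadd (tmul v1 v0) v1))))
| soa_lt0 : SOA (fallN (fneg (flt v0 tzero)))
| soa_ltS : SOA (fallN (fallN (fiff (flt v1 (tsucc v0)) (for_ (flt v1 v0) (feq v1 v0)))))
| soa_ind : SOA (fallS (fimp (fand (fmem tzero 0)
                                    (fallN (fimp (fmem v0 0) (fmem (tsucc v0) 0))))
                              (fallN (fmem v0 0))))
(* full comprehension: exists X forall n (n in X <-> phi(n)), X not free in phi *)
| soa_comp : forall p, SOA (fexS (fallN (fiff (fmem v0 0) (liftS p))))
(* Sigma^1_oo-AC_0:
   (forall n exists X phi(n,X)) ->
   exists Y forall n exists X ((forall m (m in X <-> (n,m) in Y)) /\ phi(n,X)),
   i.e. forall n phi(n,(Y)_n) *)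
| soa_ac : forall p,
    SOA (fimp (fallN (fexS p))
              (fexS (fallN (fexS
                 (fand (fallN (fiff (fmem v0 0) (fmem (tpair v1 v0) 1)))
                       (fsubst tvar (fun k => match k with 0 => 0 | S j => S (S j) end) p)))))).

(* P(a,b) for a binary formula P with free set variables 0 (first argument)
   and 1 (second argument), instantiated by set variables a, b *)
Definition app2 (P : form) (a b : nat) : form :=
  fsubst tvar (fun k => match k with 0 => a | 1 => b | S (S j) => j end) P.

(* extensional equality of set variables a, b (fallN binds no set index) *)
Definition seteq (a b : nat) : form := fallN (fiff (fmem v0 a) (fmem v0 b)).

Definition is_equiv_rel (E : form) : form :=
  fand (fallS (app2 E 0 0))
   (fand (fallS (fallS (fimp (app2 E 1 0) (app2 E 0 1))))
         (fallS (fallS (fallS (fimp (app2 E 2 1) (fimp (app2 E 1 0) (app2 E 2 0))))))).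

(* forall x exists! z F(x,z)  (uniqueness up to set equality) *)
Definition is_function (F : form) : form :=
  fallS (fexS (fand (app2 F 1 0) (fallS (fimp (app2 F 2 0) (seteq 0 1))))).

(* forall x y (E(x,y) <-> F(x) = F(y)) *)
Definition classifies (E F : form) : form :=
  fallS (fallS (fiff (app2 E 1 0) (fexS (fand (app2 F 2 0) (app2 F 1 0))))).

Definition eliminates_imaginaries (T : form -> Prop) : Prop :=
  forall E : form, fbound 0 2 E -> Prov T (is_equiv_rel E) ->
    exists F : form, fbound 0 2 F /\ Prov T (is_function F) /\ Prov T (classifies E F).

(* Main.v *)
Require Import Defs.
From Stdlib Require Import Arith Lia List Bool Classical FunctionalExtensionality ClassicalEpsilon.
Import ListNotations.

Definition scons {A} (x : A) (f : nat -> A) (n : nat) : A :=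
  match n with 0 => x | S k => f k end.

Fixpoint teval (rho : nat -> nat) (t : term) : nat :=
  match t with
  | tvar n => rho n
  | tzero => 0
  | tsucc u => S (teval rho u)
  | tadd u v => teval rho u + teval rho v
  | tmul u v => teval rho u * teval rho v
  end.

Definition nm := nat -> list bool -> Prop.
Definition extd (q p : list bool) : Prop := exists t, q = p ++ t.
Definition fm (p : list bool) (n : nat) (X : nm) : Prop :=
  forall q, extd q p -> exists r, extd r q /\ X n r.

Fixpoint frc (rho : nat -> nat) (sig : nat -> nm) (p : list bool) (f : form) : Prop :=
  match f with
  | fbot => False
  | feq u v => teval rho u = teval rho v
  | flt u v => teval rho u < teval rho v
  | fmem u X => fm p (teval rho u) (sig X)
  | fimp a b => forall q, extd q p -> frc rho sig q a -> frc rho sig q b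
  | fallN a => forall n, frc (scons n rho) sig p a
  | fallS a => forall X, frc rho (scons X sig) p a
  end.

Lemma extd_refl p : extd p p.
Proof. exists []. now rewrite app_nil_r. Qed.
Lemma extd_trans a b c : extd a b -> extd b c -> extd a c.
Proof. intros [t1 ->] [t2 ->]. exists (t2 ++ t1). now rewrite app_assoc. Qed.
Lemma extd_len a b : extd a b -> length b <= length a.
Proof. intros [t ->]. rewrite length_app. lia. Qed.
Lemma extd_antisym a b : extd a b -> extd b a -> a = b.
Proof. intros [t1 ->] [t2 H]. destruct t1. now rewrite app_nil_r.
  apply (f_equal (@length bool)) in H. rewrite !length_app in H. simpl in H. lia. Qed.
Lemma extd_app p t : extd (p ++ t) p.
Proof. now exists t. Qed.

Lemma fm_mono p q n X : fm p n X -> extd q p -> fm q n X.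
Proof. intros H Hq r Hr. apply H. eapply extd_trans; eauto. Qed.

Lemma frc_mono f : forall rho sig p q, frc rho sig p f -> extd q p -> frc rho sig q f.
Proof.
  induction f; simpl; intros rho sig p q H Hq; auto.
  - eapply fm_mono; eauto.
  - intros r Hr. apply H. eapply extd_trans; eauto.
  - intros n. eapply IHf; eauto.
  - intros X. eapply IHf; eauto.
Qed.

Lemma frc_reg f : forall rho sig p,
  (forall q, extd q p -> exists r, extd r q /\ frc rho sig r f) -> frc rho sig p f.
Proof.
  induction f; simpl; intros rho sig p H.
  - destruct (H p (extd_refl p)) as [r [_ []]].
  - destruct (H p (extd_refl p)) as [r [_ Hr]]; auto.
  - destruct (H p (extd_refl p)) as [r [_ Hr]]; auto.
  - intros q Hq. destruct (H q Hq) as [r [Hr1 Hr2]].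
    destruct (Hr2 r (extd_refl r)) as [s [Hs1 Hs2]].
    exists s. split; [eapply extd_trans; eauto|auto].
  - intros q Hq Hq1. apply IHf2. intros q' Hq'.
    destruct (H q' (extd_trans _ _ _ Hq' Hq)) as [r [Hr1 Hr2]].
    exists r. split; auto. apply Hr2. apply extd_refl.
    eapply frc_mono; eauto. eapply extd_trans; eauto.
  - intros n. apply IHf. intros q Hq. destruct (H q Hq) as [r [? ?]]. eauto.
  - intros X. apply IHf. intros q Hq. destruct (H q Hq) as [r [? ?]]. eauto.
Qed.

Lemma frc_neg rho sig p a : frc rho sig p (fneg a) <-> forall q, extd q p -> ~ frc rho sig q a.
Proof. simpl. firstorder. Qed.

Lemma frc_and rho sig p a b :
  frc rho sig p (fand a b) <-> frc rho sig p a /\ frc rho sig p b.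
Proof.
  simpl. split.
  - intros H. split.
    + apply frc_reg. intros q Hq. apply NNPP. intros Hn.
      apply (H q Hq). intros r Hr Ha. exfalso. apply Hn. exists r; auto.
    + apply frc_reg. intros q Hq. apply NNPP. intros Hn.
      apply (H q Hq). intros r Hr Ha s Hs Hb. apply Hn. exists s. split; auto.
      eapply extd_trans; eauto.
  - intros [Ha Hb] q Hq H.
    apply (H q (extd_refl q) (frc_mono _ _ _ _ _ Ha Hq) q (extd_refl q) (frc_mono _ _ _ _ _ Hb Hq)).
Qed.

Lemma frc_iff rho sig p a b :
  frc rho sig p (fiff a b) <->
  (forall q, extd q p -> frc rho sig q a -> frc rho sig q b) /\
  (forall q, extd q p -> frc rho sig q b -> frc rho sig q a).
Proof. unfold fiff. rewrite frc_and. simpl. tauto. Qed.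

Lemma frc_exS rho sig p a :
  frc rho sig p (fexS a) <-> forall q, extd q p -> exists r, extd r q /\ exists X, frc rho (scons X sig) r a.
Proof.
  simpl. split.
  - intros H q Hq. apply NNPP. intros Hn. apply (H q Hq). intros X r Hr Ha.
    apply Hn. eauto.
  - intros H q Hq Hall. destruct (H q Hq) as [r [Hr [X HX]]].
    exact (Hall X r Hr HX).
Qed.

Lemma frc_exN rho sig p a :
  frc rho sig p (fexN a) <-> forall q, extd q p -> exists r, extd r q /\ exists n, frc (scons n rho) sig r a.
Proof.
  simpl. split.
  - intros H q Hq. apply NNPP. intros Hn. apply (H q Hq). intros n r Hr Ha.
    apply Hn. eauto.
  - intros H q Hq Hall. destruct (H q Hq) as [r [Hr [n HX]]].
    exact (Hall n r Hr HX).
Qed.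

Lemma teval_tsubst rho s t : teval rho (tsubst s t) = teval (fun k => teval rho (s k)) t.
Proof. induction t; simpl; auto. Qed.

Lemma frc_subst f : forall rho sig p s r,
  frc rho sig p (fsubst s r f) <-> frc (fun k => teval rho (s k)) (fun k => sig (r k)) p f.
Proof.
  induction f; intros rho sig p s r; simpl; rewrite ?teval_tsubst; try tauto.
  - split; intros H q Hq; specialize (H q Hq); rewrite IHf1, IHf2 in *; auto.
  - assert (E : forall n, (fun k => teval (scons n rho) (upN s k)) = scons n (fun k => teval rho (s k))).
    { intros n. apply functional_extensionality. intros [|k]; simpl; auto.
      rewrite teval_tsubst. simpl. reflexivity. }
    split; intros H n; specialize (H n); rewrite IHf, E in *; auto.
  - assert (E : forall X, (fun k => scons X sig (upS r k)) = scons X (fun k => sig (r k))).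
    { intros X. apply functional_extensionality. intros [|k]; simpl; auto. }
    split; intros H X; specialize (H X); rewrite IHf, E in *; auto.
Qed.

Lemma teval_bound n t rho rho' : tbound n t -> (forall k, k < n -> rho k = rho' k) -> teval rho t = teval rho' t.
Proof. induction t; simpl; intuition; f_equal; auto. Qed.

Lemma frc_bound f : forall nn mm rho rho' sig sig' p, fbound nn mm f ->
  (forall k, k < nn -> rho k = rho' k) -> (forall k, k < mm -> sig k = sig' k) ->
  (frc rho sig p f <-> frc rho' sig' p f).
Proof.
  induction f; intros nn mm rho rho' sig sig' p Hb Hr Hs; simpl in *.
  - tauto.
  - destruct Hb. rewrite (teval_bound nn t rho rho'), (teval_bound nn t0 rho rho'); auto. tauto.
  - destruct Hb. rewrite (teval_bound nn t rho rho'), (teval_bound nn t0 rho rho'); auto. tauto.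
  - destruct Hb. rewrite (teval_bound nn t rho rho'), Hs; auto. tauto.
  - destruct Hb as [Hb1 Hb2]. split; intros H q Hq; specialize (H q Hq);
      rewrite (IHf1 nn mm rho rho' sig sig'), (IHf2 nn mm rho rho' sig sig') in *; auto.
  - split; intros H k0; specialize (H k0);
      rewrite (IHf (S nn) mm (scons k0 rho) (scons k0 rho') sig sig') in *; auto;
      intros [|j] Hj; simpl; auto; apply Hr; lia.
  - split; intros H X; specialize (H X);
      rewrite (IHf nn (S mm) rho rho' (scons X sig) (scons X sig')) in *; auto;
      intros [|j] Hj; simpl; auto; apply Hs; lia.
Qed.

Lemma extd_comp s a b : extd s a -> extd s b -> extd a b \/ extd b a.
Proof.
  intros [t1 ->] [t2 H]. apply app_eq_app in H. destruct H as [l [[H1 _]|[H1 _]]].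
  - left. now exists l.
  - right. now exists l.
Qed.

Lemma extd_neq_len a b : extd a b -> a <> b -> length b < length a.
Proof. intros [t ->] H. destruct t. rewrite app_nil_r in H. congruence.
  rewrite length_app. simpl. lia. Qed.

Lemma minimal (W : list bool -> Prop) : forall r0, W r0 ->
  exists r1, W r1 /\ extd r0 r1 /\ (forall r', W r' -> extd r1 r' -> r' = r1).
Proof.
  intros r0. remember (length r0) as n. revert r0 Heqn.
  induction n as [n IH] using lt_wf_ind. intros r0 Hn HW.
  destruct (classic (exists r', W r' /\ extd r0 r' /\ r' <> r0)) as [[r' [H1 [H2 H3]]]|Hno].
  - assert (length r' < n). { subst. apply extd_neq_len; auto. }
    destruct (IH _ H r' eq_refl H1) as [r1 [? [? ?]]].
    exists r1. split; auto. split; auto. eapply extd_trans; eauto.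
  - exists r0. split; auto. split. apply extd_refl.
    intros r' Hr' He. apply NNPP. intros Hne. apply Hno. exists r'. repeat split; auto.
    all: try (intros ->; apply Hne; reflexivity).
Qed.

Lemma pair_inj a b c d : (a+b)*(a+b)+a = (c+d)*(c+d)+c -> a = c /\ b = d.
Proof.
  intros H. destruct (lt_eq_lt_dec (a+b) (c+d)) as [[H1|H1]|H1].
  - exfalso. assert ((a+b+1)*(a+b+1) <= (c+d)*(c+d)) by (apply Nat.mul_le_mono; lia). nia.
  - assert (a = c) by nia. lia.
  - exfalso. assert ((c+d+1)*(c+d+1) <= (a+b)*(a+b)) by (apply Nat.mul_le_mono; lia). nia.
Qed.

Lemma frc_envs rho rho' sig sig' p f : (forall k, rho k = rho' k) -> (forall k, sig k = sig' k) ->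
  frc rho sig p f -> frc rho' sig' p f.
Proof. intros H1 H2. apply functional_extensionality in H1, H2. now subst. Qed.

Definition nmdummy : nm := fun _ _ => False.

Lemma sound_ac p rho sig q0 :
 frc rho sig q0 (fimp (fallN (fexS p))
              (fexS (fallN (fexS
                 (fand (fallN (fiff (fmem v0 0) (fmem (tpair v1 v0) 1)))
                       (fsubst tvar (fun k => match k with 0 => 0 | S j => S (S j) end) p)))))).
Proof.
  cbn [frc]. intros q Hq H. cbn [frc] in H.
  set (W := fun n r => extd r q /\ exists X, frc (scons n rho) (scons X sig) r p).
  set (MinW := fun n r => W n r /\ forall r', W n r' -> extd r r' -> r' = r).
  set (wit := fun n r => epsilon (inhabits nmdummy) (fun X => frc (scons n rho) (scons X sig) r p)).
  set (Yn := fun n m s => exists r, MinW n r /\ extd s r /\ wit n r m s).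
  set (Y := fun k s => exists n m, k = (n+m)*(n+m)+n /\ Yn n m s).
  rewrite frc_exS. intros q' Hq'. exists q'. split; [apply extd_refl|]. exists Y.
  cbn [frc]. intros n. rewrite frc_exS. intros q1 Hq1.
  assert (Hq1q : extd q1 q) by (eapply extd_trans; eauto).
  pose proof (H n) as Hn. rewrite frc_exS in Hn.
  destruct (Hn q1 Hq1q) as [r0 [Hr0 [X0 HX0]]].
  assert (HW : W n r0). { split. eapply extd_trans; eauto. eauto. }
  destruct (minimal (W n) r0 HW) as [r1 [HW1 [Hr01 Hmin]]].
  assert (Hspec : frc (scons n rho) (scons (wit n r1) sig) r1 p).
  { unfold wit. apply epsilon_spec. destruct HW1 as [_ HH]. exact HH. }
  assert (Key : forall m s, extd s r1 -> (wit n r1 m s <-> Y ((n+m)*(n+m)+n) s)).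
  { intros m s Hs. split.
    - intros Hw. exists n, m. split; auto. exists r1. split; [split; auto|]. auto.
    - intros [n' [m' [He [r2 [[HW2 Hmin2] [Hs2 Hw2]]]]]].
      apply pair_inj in He. destruct He; subst n' m'.
      destruct (extd_comp s r1 r2 Hs Hs2) as [Hc|Hc].
      + assert (r2 = r1) by (apply Hmin; auto). subst. auto.
      + assert (r1 = r2) by (apply Hmin2; auto). subst. auto. }
  exists r0. split; auto. exists (wit n r1).
  rewrite frc_and. split.
  - cbn [frc]. intros m. rewrite frc_iff. cbn [frc teval scons tpair v0 v1].
    split; intros t Ht Hf u Hu; destruct (Hf u Hu) as [w [Hw1 Hw2]]; exists w; split; auto.
    + apply (Key m w); auto. repeat (eapply extd_trans; eauto).
    + apply (Key m w); auto. repeat (eapply extd_trans; eauto).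
  - rewrite frc_subst. simpl teval.
    eapply frc_envs; [| |exact (frc_mono _ _ _ _ _ Hspec Hr01)].
    + intros k; reflexivity.
    + intros [|k]; reflexivity.
Qed.

Lemma sound_ax f : SOA f -> forall rho sig p, frc rho sig p f.
Proof.
  destruct 1; intros rho sig p0.
  - cbn. intros n q _ H. discriminate.
  - cbn. intros m n q _ H. congruence.
  - cbn. intros n. lia.
  - cbn. intros m n. lia.
  - cbn. intros n. lia.
  - cbn. intros m n. lia.
  - cbn. intros n q _ H. lia.
  - cbn [frc]. intros m n. rewrite frc_iff. unfold for_, fneg. cbn [frc teval scons v0 v1].
    split.
    + intros q _ H r _ H2. assert (~ m < n) by (intro; eapply H2; [apply extd_refl|eauto]). lia.
    + intros q _ H. destruct (Nat.lt_ge_cases m n); [lia|].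
      enough (m = n) by lia. apply (H q (extd_refl q)). intros r _ Hr. lia.
  - cbn [frc]. intros X q _ H. rewrite frc_and in H. destruct H as [H0 HS].
    cbn [frc teval scons v0] in *. intros n. induction n.
    + exact H0.
    + apply (HS n q (extd_refl q) IHn).
  - rewrite frc_exS. intros q _. exists q. split; [apply extd_refl|].
    exists (fun n r => frc (scons n rho) sig r p).
    cbn [frc]. intros n. rewrite frc_iff. cbn [frc teval scons v0]. unfold liftS.
    split.
    + intros r _ H. rewrite frc_subst. eapply frc_envs; [| |apply frc_reg]. 
      * intros k; reflexivity.
      * intros k; reflexivity.
      * intros r' Hr'. destruct (H r' Hr') as [s [Hs Hs2]]. exists s. split; auto.
    + intros r _ H. rewrite frc_subst in H. intros r' Hr'. exists r'. split; [apply extd_refl|].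
      eapply frc_mono; [|exact Hr']. eapply frc_envs; [| |exact H]; intros k; reflexivity.
  - apply sound_ac.
Qed.

Theorem soundness f : Prov SOA f -> forall rho sig p, frc rho sig p f.
Proof.
  induction 1; intros rho sig p0.
  - apply sound_ax; auto.
  - cbn. intros w _ Hp w2 Hw2 _. eapply frc_mono; eauto.
  - cbn. intros w _ H1 w1 Hw1 H2 w3 Hw3 Ha.
    apply (H1 w3 (extd_trans _ _ _ Hw3 Hw1) Ha w3 (extd_refl _) (H2 w3 Hw3 Ha)).
  - cbn. intros w _ H. apply frc_reg. intros w2 Hw2. apply NNPP. intros Hn.
    apply (H w2 Hw2). intros s Hs Hp. apply Hn. exists s; auto.
  - apply (IHProv1 rho sig p0 p0 (extd_refl _) (IHProv2 rho sig p0)).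
  - cbn [frc]. intros w _ H. unfold instN. rewrite frc_subst.
    eapply frc_envs; [| |exact (H (teval rho t))]; intros [|k]; reflexivity.
  - cbn [frc]. intros w _ H w2 Hw2 Hw n. apply (H n w2 Hw2). unfold liftN. rewrite frc_subst.
    eapply frc_envs; [| |exact Hw]; intros k; reflexivity.
  - cbn [frc]. intros n. apply IHProv.
  - cbn [frc]. intros w _ H. unfold instS. rewrite frc_subst.
    eapply frc_envs; [| |exact (H (sig Y))]; intros [|k]; reflexivity.
  - cbn [frc]. intros w _ H w2 Hw2 Hw X. apply (H X w2 Hw2). unfold liftS. rewrite frc_subst.
    eapply frc_envs; [| |exact Hw]; intros k; reflexivity.
  - cbn [frc]. intros X. apply IHProv.
  - cbn. reflexivity.
  - cbn [frc]. intros w _ He w2 _ H. unfold instN in *. rewrite frc_subst in *.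
    eapply frc_envs; [| |exact H]; intros [|k]; simpl; auto.
Qed.

Definition Rf (a b : nat) : form :=
  fexN (fallN (fimp (flt v1 v0) (fimp (fmem v0 a) (fmem v0 b)))).
Definition Erel : form := fallS (fiff (Rf 1 0) (Rf 2 0)).

Lemma app2_Erel a b : app2 Erel a b = fallS (fiff (Rf (S a) 0) (Rf (S b) 0)).
Proof. reflexivity. Qed.

Lemma Erel_bound : fbound 0 2 Erel.
Proof. cbn. repeat split; lia. Qed.

Inductive Der (G : list form) : form -> Prop :=
| dhyp : forall p, In p G -> Der G p
| dthm : forall p, Prov SOA p -> Der G p
| dmp : forall p q, Der G (fimp p q) -> Der G p -> Der G q.

Lemma prov_I p : Prov SOA (fimp p p).
Proof.
  eapply pr_MP. eapply pr_MP. apply (pr_S _ p (fimp p p) p).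
  apply pr_K. apply (pr_K _ p p).
Qed.

Lemma deduction G a b : Der (a :: G) b -> Der G (fimp a b).
Proof.
  induction 1.
  - destruct H as [->|H]. apply dthm, prov_I.
    eapply dmp. apply dthm, pr_K. apply dhyp; auto.
  - eapply dmp. apply dthm, pr_K. apply dthm; auto.
  - eapply dmp. eapply dmp. apply dthm, (pr_S _ a p q). auto. auto.
Qed.

Lemma der_prov p : Der [] p -> Prov SOA p.
Proof.
  induction 1. destruct H. auto. eapply pr_MP; eauto.
Qed.

Lemma der_weak G p : Der [] p -> Der G p.
Proof. intros H. apply dthm, der_prov, H. Qed.

Lemma der_efq G p : Der G fbot -> Der G p.
Proof.
  intros H. eapply dmp. apply dthm, pr_DN.
  eapply dmp. apply dthm, (pr_K _ fbot (fneg p)). exact H.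
Qed.

Lemma der_mono G G' p : incl G G' -> Der G p -> Der G' p.
Proof. intros HI. induction 1. apply dhyp; auto. apply dthm; auto. eapply dmp; eauto. Qed.

Lemma der_cons G a p : Der G p -> Der (a :: G) p.
Proof. apply der_mono. intros x Hx. right; auto. Qed.

Lemma der_and_i G a b : Der G a -> Der G b -> Der G (fand a b).
Proof.
  intros Ha Hb. unfold fand, fneg. apply deduction.
  eapply dmp. eapply dmp. apply dhyp; left; reflexivity.
  - apply der_cons, Ha.
  - apply der_cons, Hb.
Qed.

Lemma der_and_l G a b : Der G (fand a b) -> Der G a.
Proof.
  intros H. eapply dmp. apply dthm, pr_DN. unfold fneg. apply deduction.
  eapply dmp. apply der_cons, H. apply deduction. apply der_efq.
  eapply dmp. apply dhyp; right; left; reflexivity. apply dhyp; left; reflexivity.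
Qed.

Lemma der_and_r G a b : Der G (fand a b) -> Der G b.
Proof.
  intros H. eapply dmp. apply dthm, pr_DN. unfold fneg. apply deduction.
  eapply dmp. apply der_cons, H. apply deduction. apply der_cons. apply dhyp; left; reflexivity.
Qed.

Lemma der_mp G a b : Der G (fimp a b) -> Der G a -> Der G b.
Proof. apply dmp. Qed.

Lemma hyp0 G a : Der (a :: G) a.
Proof. apply dhyp; left; reflexivity. Qed.
Lemma hyp1 G a b : Der (b :: a :: G) a.
Proof. apply dhyp; right; left; reflexivity. Qed.

Lemma prov_iff_refl A : Prov SOA (fiff A A).
Proof. apply der_prov. apply der_and_i; apply dthm, prov_I. Qed.

Lemma prov_iff_sym A B : Prov SOA (fimp (fiff A B) (fiff B A)).
Proof.
  apply der_prov. apply deduction. unfold fiff.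
  apply der_and_i. eapply der_and_r, hyp0. eapply der_and_l, hyp0.
Qed.

Lemma prov_iff_trans A B C : Prov SOA (fimp (fiff A B) (fimp (fiff B C) (fiff A C))).
Proof.
  apply der_prov. apply deduction. apply deduction. unfold fiff.
  apply der_and_i; apply deduction.
  - eapply der_mp. eapply der_and_l. apply der_cons, hyp0.
    eapply der_mp. eapply der_and_l. apply der_cons, hyp1. apply hyp0.
  - eapply der_mp. eapply der_and_r. apply der_cons, hyp1.
    eapply der_mp. eapply der_and_r. apply der_cons, hyp0. apply hyp0.
Qed.

Lemma prov_trans a b c : Prov SOA (fimp a b) -> Prov SOA (fimp b c) -> Prov SOA (fimp a c).
Proof.
  intros H1 H2. apply der_prov. apply deduction. eapply der_mp. apply dthm, H2.
  eapply der_mp. apply dthm, H1. apply hyp0.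
Qed.

Lemma all_mono p q : instS 0 (fsubst tvar (upS S) p) = p ->
  Prov SOA (fimp p q) -> Prov SOA (fimp (fallS p) (fallS q)).
Proof.
  intros Hi H. eapply pr_MP. apply (pr_qimpS _ q (fallS p)).
  apply pr_genS. unfold liftS. simpl fsubst.
  eapply prov_trans; [|exact H].
  rewrite <- Hi at 2. apply pr_instS.
Qed.

Lemma all_mono2 P Q R : instS 0 (fsubst tvar (upS S) P) = P ->
  instS 0 (fsubst tvar (upS S) Q) = Q ->
  instS 0 (fsubst tvar (upS S) (fimp Q R)) = fimp Q R ->
  Prov SOA (fimp P (fimp Q R)) -> Prov SOA (fimp (fallS P) (fimp (fallS Q) (fallS R))).
Proof.
  intros HP HQ HQR H.
  eapply prov_trans. apply (all_mono _ _ HP H).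
  eapply prov_trans.
  2: apply (pr_qimpS _ R (fallS Q)).
  apply all_mono; auto.
  apply der_prov. apply deduction. apply deduction.
  eapply der_mp. apply der_cons, hyp0.
  eapply der_mp. 2: apply hyp0.
  apply dthm. unfold liftS. simpl fsubst. rewrite <- HQ at 2. apply pr_instS.
Qed.

Lemma Erel_equiv : Prov SOA (is_equiv_rel Erel).
Proof.
  unfold is_equiv_rel. rewrite !app2_Erel.
  apply der_prov. apply der_and_i; [|apply der_and_i]; apply dthm.
  - apply pr_genS, pr_genS, prov_iff_refl.
  - apply pr_genS, pr_genS. apply all_mono. reflexivity. apply prov_iff_sym.
  - apply pr_genS, pr_genS, pr_genS. apply all_mono2; try reflexivity. apply prov_iff_trans.
Qed.

Fixpoint flip (f : nat -> bool) (s : list bool) : list bool :=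
  match s with
  | [] => []
  | b :: s' => xorb (f 0) b :: flip (fun i => f (S i)) s'
  end.

Lemma flip_nth f s m : nth_error (flip f s) m = option_map (xorb (f m)) (nth_error s m).
Proof. revert f m; induction s; intros f [|m]; simpl; auto. apply (IHs (fun i => f (S i)) m). Qed.

Lemma flip_invol f s : flip f (flip f s) = s.
Proof. revert f; induction s; intros f; simpl; auto. rewrite IHs. now destruct (f 0), a. Qed.

Lemma flip_app f p t : flip f (p ++ t) = flip f p ++ flip (fun i => f (length p + i)) t.
Proof. revert f; induction p; intros f; simpl; auto. now rewrite IHp. Qed.

Lemma flip_extd f q p : extd q p -> extd (flip f q) (flip f p).
Proof. intros [t ->]. rewrite flip_app. apply extd_app. Qed.

Lemma flip_extd_iff f q p : extd (flip f q) p <-> extd q (flip f p).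
Proof. split; intros H.
  - rewrite <- (flip_invol f q). now apply flip_extd.
  - rewrite <- (flip_invol f p). now apply flip_extd. Qed.

Definition piN (f : nat -> bool) (X : nm) : nm := fun m s => X m (flip f s).

Lemma piN_invol f X : piN f (piN f X) = X.
Proof. unfold piN. apply functional_extensionality; intros m.
  apply functional_extensionality; intros s. now rewrite flip_invol. Qed.

Lemma fm_aut f p n X : fm p n X -> fm (flip f p) n (piN f X).
Proof.
  intros H q Hq. apply flip_extd_iff in Hq. destruct (H _ Hq) as [r [Hr HX]].
  exists (flip f r). split. apply flip_extd_iff. exact Hr.
  unfold piN. now rewrite flip_invol.
Qed.

Lemma fm_aut_iff f p n X : fm p n X <-> fm (flip f p) n (piN f X).
Proof. split. apply fm_aut. intros H. apply (fm_aut f) in H.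
  now rewrite flip_invol, piN_invol in H. Qed.

Lemma frc_aut f phi : forall rho sig sig' p, (forall k, sig' k = piN f (sig k)) ->
  (frc rho sig p phi <-> frc rho sig' (flip f p) phi).
Proof.
  induction phi; intros rho sig sig' p Hs; simpl; try tauto.
  - rewrite Hs. apply fm_aut_iff.
  - split.
    + intros H q Hq H1. rewrite <- (flip_invol f q) in H1 |- *.
      rewrite <- IHphi2 by auto. apply H. apply flip_extd_iff; auto.
      rewrite IHphi1; eauto.
    + intros H q Hq H1. rewrite IHphi2 by eauto. apply H. now apply flip_extd.
      rewrite <- IHphi1; eauto.
  - split; intros H n; specialize (H n); [apply (IHphi _ sig sig' p Hs)|apply (IHphi _ sig sig' p Hs)]; auto.
  - split.
    + intros H X. rewrite <- (IHphi rho (scons (piN f X) sig)). apply H.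
      intros [|k]; simpl; auto. now rewrite piN_invol.
    + intros H X. rewrite (IHphi rho (scons X sig) (scons (piN f X) sig')). apply H.
      intros [|k]; simpl; auto.
Qed.

Definition NE (p : list bool) (X Y : nm) : Prop :=
  forall m q, extd q p -> (fm q m X -> fm q m Y) /\ (fm q m Y -> fm q m X).

Lemma NE_mono p q X Y : NE p X Y -> extd q p -> NE q X Y.
Proof. intros H Hq m r Hr. apply H. eapply extd_trans; eauto. Qed.
Lemma NE_refl p X : NE p X X.
Proof. intros m q _. tauto. Qed.
Lemma NE_sym p X Y : NE p X Y -> NE p Y X.
Proof. intros H m q Hq. specialize (H m q Hq). tauto. Qed.

Lemma frc_NE phi : forall rho sig sig' p, (forall k, NE p (sig k) (sig' k)) ->
  frc rho sig p phi -> frc rho sig' p phi.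
Proof.
  induction phi; intros rho sig sig' p Hs; simpl; auto.
  - intros H. apply (Hs n). apply extd_refl. auto.
  - intros H q Hq H1. eapply IHphi2; [|apply H; auto].
    intros k; eapply NE_mono; eauto.
    eapply IHphi1; [|exact H1]. intros k; apply NE_sym; eapply NE_mono; eauto.
  - intros H n. eapply IHphi; eauto.
  - intros H X. eapply IHphi; [|apply H]. intros [|k]; simpl; auto. apply NE_refl.
Qed.

Lemma fm_reg p m X : (forall q, extd q p -> exists r, extd r q /\ fm r m X) -> fm p m X.
Proof.
  intros H q Hq. destruct (H q Hq) as [r [Hr Hf]]. destruct (Hf r (extd_refl r)) as [s [Hs HX]].
  exists s. split; auto. eapply extd_trans; eauto.
Qed.

Lemma compat l1 l2 : (forall i a b, nth_error l1 i = Some a -> nth_error l2 i = Some b -> a = b) ->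
  extd l1 l2 \/ extd l2 l1.
Proof.
  revert l2; induction l1; intros l2 H.
  - right. now exists l2.
  - destruct l2 as [|b l2].
    + left. exists (a :: l1). reflexivity.
    + assert (a = b) by (apply (H 0); reflexivity). subst.
      destruct (IHl1 l2) as [[t Ht]|[t Ht]].
      * intros i x y H1 H2. apply (H (S i)); auto.
      * left. exists t. simpl. now rewrite Ht.
      * right. exists t. simpl. now rewrite Ht.
Qed.

Definition mask (p q : list bool) (i : nat) : bool :=
  match nth_error p i, nth_error q i with
  | Some a, Some b => xorb a b
  | _, _ => false
  end.

Lemma mask_fin p q i : length p <= i -> mask p q i = false.
Proof. intros H. unfold mask. now rewrite (proj2 (nth_error_None p i) H). Qed.

Lemma mask_compat p q : extd (flip (mask p q) p) q \/ extd q (flip (mask p q) p).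
Proof.
  apply compat. intros i a b H1 H2. rewrite flip_nth in H1. unfold mask in H1.
  rewrite H2 in H1. destruct (nth_error p i); simpl in H1; [|discriminate].
  inversion H1. now destruct b0, b.
Qed.

Definition cN : nm := fun m s => nth_error s m = Some true.
Definition alpha : nat -> bool := fun _ => true.
Definition cbar : nm := piN alpha cN.
Definition r0 : nat -> nat := fun _ => 0.
Definition s0 : nat -> nm := fun _ => nmdummy.
Definition G2 (phi : form) (p : list bool) (x y : nm) : Prop := frc r0 (scons x (scons y s0)) p phi.

Lemma app2_sem phi a b rho sig p : fbound 0 2 phi ->
  (frc rho sig p (app2 phi a b) <-> G2 phi p (sig a) (sig b)).
Proof.
  intros Hb. unfold app2, G2. rewrite frc_subst. apply (frc_bound _ 0 2); auto.
  intros k Hk; lia. intros [|[|k]] Hk; simpl; auto; lia.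
Qed.

Definition RS (p : list bool) (X Z : nm) : Prop :=
  forall q, extd q p -> exists r, extd r q /\ exists N, forall n s, extd s r -> N < n ->
    forall s', extd s' s -> fm s' n X -> fm s' n Z.

Lemma Rf_sem rho sig p a b : frc rho sig p (Rf a b) <-> RS p (sig a) (sig b).
Proof. unfold Rf, RS. rewrite frc_exN. cbn [frc teval scons v0 v1]. tauto. Qed.

Lemma RS_trans K p X Y Z : (forall m, K <= m -> forall s, Y m s -> X m s) -> RS p X Z -> RS p Y Z.
Proof.
  intros HK H q Hq. destruct (H q Hq) as [r [Hr [N HN]]]. exists r. split; auto.
  exists (N + K). intros n s Hs Hn s' Hs' Hf. apply (HN n s Hs ltac:(lia) s' Hs').
  intros t Ht. destruct (Hf t Ht) as [u [Hu HY]]. exists u. split; auto. apply HK; auto. lia.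
Qed.

Lemma E_agree K x y p : (forall m, K <= m -> forall s, x m s <-> y m s) -> G2 Erel p x y.
Proof.
  intros HK. unfold G2, Erel. cbn [frc]. intros Z. rewrite frc_iff.
  split; intros q _ H; rewrite Rf_sem in *; simpl in *.
  - apply (RS_trans K _ x y _ ltac:(intros m Hm s; apply (HK m Hm s)) H).
  - apply (RS_trans K _ y x _ ltac:(intros m Hm s; apply (HK m Hm s)) H).
Qed.

Lemma cbar_eq m s : cbar m s <-> nth_error s m = Some false.
Proof. unfold cbar, piN, cN. rewrite flip_nth. destruct (nth_error s m) as [[|]|]; simpl; split; congruence. Qed.

Lemma extd_nth t s n : extd t s -> n < length s -> nth_error t n = nth_error s n.
Proof. intros [u ->] H. apply nth_error_app1; auto. Qed.

Lemma E_not : ~ G2 Erel [] cN cbar.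
Proof.
  unfold G2, Erel. cbn [frc]. intros H. specialize (H cN). rewrite frc_iff in H.
  destruct H as [H _]. specialize (H [] (extd_refl _)). rewrite !Rf_sem in H. simpl in H.
  assert (HR : RS [] cN cN).
  { intros q _. exists q. split. apply extd_refl. exists 0. intros; auto. }
  specialize (H HR [] (extd_refl _)). destruct H as [r [_ [N HN]]].
  set (n := N + length r + 1).
  set (s := r ++ repeat false (n + 1 - length r)).
  assert (Hsn : nth_error s n = Some false).
  { unfold s. rewrite nth_error_app2 by lia. apply nth_error_repeat. lia. }
  assert (Hls : n < length s). { unfold s. rewrite length_app, repeat_length. lia. }
  assert (Hfm : fm s n cbar).
  { intros q Hq. exists q. split. apply extd_refl. apply cbar_eq. rewrite (extd_nth q s); auto. }
  specialize (HN n s (extd_app _ _) ltac:(lia) s (extd_refl _) Hfm).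
  destruct (HN s (extd_refl _)) as [t [Ht Hc]]. unfold cN in Hc.
  rewrite (extd_nth t s) in Hc; auto. congruence.
Qed.

Definition IFp F := forall x p q, extd q p -> exists r, extd r q /\ exists z, G2 F r x z /\
  (forall w r', extd r' r -> G2 F r' x w -> NE r' w z).
Definition CLfp F := forall x y q, G2 Erel q x y -> forall q', extd q' q ->
  exists r, extd r q' /\ exists z, G2 F r x z /\ G2 F r y z.
Definition CLbp F := forall x y q, (forall q', extd q' q ->
  exists r, extd r q' /\ exists z, G2 F r x z /\ G2 F r y z) -> G2 Erel q x y.
Definition Th F m x p := forall q, extd q p -> exists r, extd r q /\ exists z, G2 F r x z /\ fm r m z.

Lemma G2_mono F p q x y : G2 F p x y -> extd q p -> G2 F q x y.
Proof. apply frc_mono. Qed.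

Lemma U F : IFp F -> forall x z1 z2 r m, G2 F r x z1 -> G2 F r x z2 -> fm r m z1 -> fm r m z2.
Proof.
  intros IF x z1 z2 r m H1 H2 Hm. apply fm_reg. intros q Hq.
  destruct (IF x r q Hq) as [s [Hs [z [Hz Hu]]]]. exists s. split; auto.
  assert (Hsr : extd s r) by (eapply extd_trans; eauto).
  pose proof (Hu z1 s (extd_refl _) (G2_mono _ _ _ _ _ H1 Hsr)) as N1.
  pose proof (Hu z2 s (extd_refl _) (G2_mono _ _ _ _ _ H2 Hsr)) as N2.
  apply (proj2 (N2 m s (extd_refl _))). apply (proj1 (N1 m s (extd_refl _))).
  eapply fm_mono; eauto.
Qed.

Lemma Th_mono F m x p q : Th F m x p -> extd q p -> Th F m x q.
Proof. intros H Hq r Hr. apply H. eapply extd_trans; eauto. Qed.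

Lemma Th_reg F m x p : (forall q, extd q p -> exists r, extd r q /\ Th F m x r) -> Th F m x p.
Proof.
  intros H q Hq. destruct (H q Hq) as [r [Hr Ht]]. destruct (Ht r (extd_refl _)) as [s [Hs Hz]].
  exists s. split; auto. eapply extd_trans; eauto.
Qed.

Lemma Inv F : IFp F -> CLfp F -> forall x y m p, (forall q, G2 Erel q x y) -> Th F m x p -> Th F m y p.
Proof.
  intros IF CLf x y m p HE Ht q Hq. destruct (Ht q Hq) as [r [Hr [z [Hz Hm]]]].
  destruct (CLf x y r (HE r) r (extd_refl _)) as [s [Hs [z' [H1 H2]]]].
  exists s. split. eapply extd_trans; eauto. exists z'. split; auto.
  apply (U F IF x z z' s m); auto. eapply G2_mono; eauto. eapply fm_mono; eauto.
Qed.

Lemma G2_aut F f r x z : G2 F r x z -> G2 F (flip f r) (piN f x) (piN f z).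
Proof.
  unfold G2. intros H. apply (frc_aut f F r0 (scons x (scons z s0))); auto.
  intros [|[|k]]; reflexivity.
Qed.

Lemma Th_aut F f m x p : Th F m x p -> Th F m (piN f x) (flip f p).
Proof.
  intros H q Hq. apply flip_extd_iff in Hq. destruct (H _ Hq) as [r [Hr [z [Hz Hm]]]].
  exists (flip f r). split. apply flip_extd_iff. exact Hr.
  exists (piN f z). split. apply G2_aut; auto. apply fm_aut; auto.
Qed.

Lemma ev_agree f K : (forall i, K <= i -> f i = false) -> forall q, G2 Erel q (piN f cN) cN.
Proof.
  intros HK q. apply (E_agree K). intros m Hm s. unfold piN, cN. rewrite flip_nth, HK by auto.
  destruct (nth_error s m) as [b|]; simpl; try tauto.
Qed.

Lemma Dich F : IFp F -> CLfp F -> forall m p, Th F m cN p -> forall q, Th F m cN q.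
Proof.
  intros IF CLf m p H q. apply Th_reg. intros q' Hq'.
  set (g := mask p q').
  assert (H1 : Th F m cN (flip g p)).
  { apply (Inv F IF CLf (piN g cN)). apply (ev_agree g (length p)). intros i Hi. apply mask_fin; auto.
    apply Th_aut; auto. }
  destruct (mask_compat p q') as [Hc|Hc].
  - exists (flip g p). split; auto.
  - exists q'. split. apply extd_refl. eapply Th_mono; eauto.
Qed.

Lemma Both F : IFp F -> CLfp F -> forall m, ((exists p, Th F m cN p) \/ (exists p, Th F m cbar p)) ->
  forall q, Th F m cN q /\ Th F m cbar q.
Proof.
  intros IF CLf m H.
  assert (Hc : forall q, Th F m cN q).
  { destruct H as [[p Hp]|[p Hp]].
    - apply (Dich F IF CLf m p Hp).
    - apply (Dich F IF CLf m (flip alpha p)). apply Th_aut with (f := alpha) in Hp.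
      unfold cbar in Hp. rewrite piN_invol in Hp. exact Hp. }
  intros q. split; auto. rewrite <- (flip_invol alpha q). apply Th_aut. auto.
Qed.

Lemma final F : IFp F -> CLfp F -> CLbp F -> False.
Proof.
  intros IF CLf CLb. apply E_not. apply CLb. intros q' _.
  destruct (IF cN q' q' (extd_refl _)) as [r [Hr [z [Hz _]]]].
  destruct (IF cbar r r (extd_refl _)) as [s [Hs [z' [Hz' Hu']]]].
  assert (Hzs : G2 F s cN z) by (eapply G2_mono; eauto).
  assert (HNE : NE s z' z).
  { intros m t Ht. split.
    - intros Hm. apply fm_reg. intros u Hu.
      assert (Tb : Th F m cbar t).
      { intros v Hv. exists v. split. apply extd_refl. exists z'. split.
        eapply G2_mono; [exact Hz'|]. repeat (eapply extd_trans; eauto).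
        eapply fm_mono; eauto. }
      pose proof (proj1 (Both F IF CLf m (or_intror (ex_intro _ t Tb)) t)) as Tc.
      destruct (Tc u Hu) as [v [Hv [z'' [Hz'' Hm'']]]].
      exists v. split; auto.
      apply (U F IF cN z'' z v m); auto.
      eapply G2_mono; [exact Hzs|]. repeat (eapply extd_trans; eauto).
    - intros Hm. apply fm_reg. intros u Hu.
      assert (Tc : Th F m cN t).
      { intros v Hv. exists v. split. apply extd_refl. exists z. split.
        eapply G2_mono; [exact Hzs|]. repeat (eapply extd_trans; eauto).
        eapply fm_mono; eauto. }
      pose proof (proj2 (Both F IF CLf m (or_introl (ex_intro _ t Tc)) t)) as Tb.
      destruct (Tb u Hu) as [v [Hv [z'' [Hz'' Hm'']]]].
      exists v. split; auto.
      apply (U F IF cbar z'' z' v m); auto.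
      eapply G2_mono; [exact Hz'|]. repeat (eapply extd_trans; eauto). }
  exists s. split. eapply extd_trans; eauto. exists z. split; auto.
  unfold G2 in *. eapply frc_NE; [|exact Hz'].
  intros [|[|k]]; simpl. apply NE_refl. exact HNE. apply NE_refl.
Qed.

Lemma get_IF F : fbound 0 2 F -> Prov SOA (is_function F) -> IFp F.
Proof.
  intros Hb HP x p q Hq. pose proof (soundness _ HP r0 s0 p) as H.
  unfold is_function in H. cbn [frc] in H. specialize (H x). rewrite frc_exS in H.
  destruct (H q Hq) as [r [Hr [z Hz]]]. rewrite frc_and in Hz. destruct Hz as [H1 H2].
  exists r. split; auto. exists z. split.
  - rewrite app2_sem in H1 by auto. exact H1.
  - intros w r' Hr' Hw. cbn [frc] in H2. specialize (H2 w r' Hr').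
    rewrite app2_sem in H2 by auto. specialize (H2 Hw).
    unfold seteq in H2. cbn [frc] in H2. intros m t Ht. specialize (H2 m).
    rewrite frc_iff in H2. cbn [frc teval scons v0] in H2. destruct H2 as [Ha Hb'].
    split; [apply Ha|apply Hb']; auto.
Qed.

Lemma get_CL F : fbound 0 2 F -> Prov SOA (classifies Erel F) -> CLfp F /\ CLbp F.
Proof.
  intros Hb HP. split.
  - intros x y q HE q' Hq'. pose proof (soundness _ HP r0 s0 q) as H.
    unfold classifies in H. cbn [frc] in H. specialize (H x y). rewrite frc_iff in H.
    destruct H as [H _]. specialize (H q (extd_refl _)).
    rewrite app2_sem in H by apply Erel_bound. specialize (H HE).
    rewrite frc_exS in H. destruct (H q' Hq') as [r [Hr [z Hz]]].
    rewrite frc_and, !app2_sem in Hz by auto. exists r. split; auto. exists z. exact Hz.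
  - intros x y q Hd. pose proof (soundness _ HP r0 s0 q) as H.
    unfold classifies in H. cbn [frc] in H. specialize (H x y). rewrite frc_iff in H.
    destruct H as [_ H]. specialize (H q (extd_refl _)).
    rewrite app2_sem in H by apply Erel_bound. apply H.
    rewrite frc_exS. intros q' Hq'. destruct (Hd q' Hq') as [r [Hr [z Hz]]].
    exists r. split; auto. exists z. rewrite frc_and, !app2_sem by auto. exact Hz.
Qed.

Theorem theorem2p2 : ~ eliminates_imaginaries SOA.
Proof.
  intros H. destruct (H Erel Erel_bound Erel_equiv) as [F [Hb [Hf Hc]]].
  destruct (get_CL F Hb Hc) as [CLf CLb].
  exact (final F (get_IF F Hb Hf) CLf CLb).
Qed.
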